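(* Let $R_1$ be a nonaxisymmetric rigid component in $\mathbb{R}^3$ ($n_r^1>1$), and let $R_2,R_3,R_4$ be rods ($n_r^2=n_r^3=n_r^4=1$), all in generic position. Suppose that: - $R_1$ intersects each of $R_2,R_3,R_4$ in one instance, containing the points $\mathbf p_1\in R_1\cap R_2$, $\mathbf p_2\in R_1\cap R_3$ and $\mathbf p_3\in R_1\cap R_4$ respectively; - $R_2$ intersects $R_3$ in one instance containing $\mathbf p_4$; - $R_3$ intersects $R_4$ in one instance containing $\mathbf p_5$. Then the composite body $R_1\cup R_2\cup R_3\cup R_4$ is rigid, unless $\mathbf p_1,\mathbf p_2,\mathbf p_3$ lie along one rod.
   Context: A rod is a straight segment in $\mathbb{R}^3$. A rigid component (rigid body) $R_i$ is a set of rods that moves as a single rigid body; $n_r^i$ denotes the number of rods it contains, and a component with $n_r^i=1$ is a rod. A component with $n_r^i>1$ is called nonaxisymmetric and may be planar or nonplanar. The intersection of two distinct components consists of connected pieces, called instances (contacts). Distinct components share no rod. Positions are generic apart from the stated incidences. A union of components is rigid if it is infinitesimally rigid in the following sense. An infinitesimal motion is admissible if its restriction to each component preserves, to first order, all distances between points of that component, and if points on a common rod (e.g. the three contact points on a rod) remain collinear, with fixed ratios along the rod, to first order. The union is rigid if every admissible infinitesimal motion is a Euclidean rigid motion of the whole union. Equivalently, the composite rigidity matrix has a right nullspace of dimension $6$. *)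

(* Defs.v *)
From HB Require Import structures.
From mathcomp Require Import all_boot all_order all_algebra.
From mathcomp Require Import reals.
Set Implicit Arguments. Unset Strict Implicit. Unset Printing Implicit Defensive.
Import Order.TTheory GRing.Theory Num.Theory.
Local Open Scope ring_scope.

Section RodDefs.
Variable R : realType.

Definition pt := 'rV[R]_3.

(* A rod: the straight segment between its two endpoints. *)
Definition rod := (pt * pt)%type.

Definition nondeg_rod (r : rod) : Prop := r.1 != r.2.

Definition on_rod (r : rod) (x : pt) : Prop :=
  exists t : R, 0 <= t <= 1 /\ x = (1 - t) *: r.1 + t *: r.2.

(* A rigid component is a list of rods; its point set is the union of the rods. *)
Definition component := seq rod.

Definition in_comp (C : component) (x : pt) : Prop :=
  exists r, r \in C /\ on_rod r x.

(* An infinitesimal Euclidean (rigid) motion: velocity field x |-> a + x W,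
   with W skew-symmetric (infinitesimal rotation) and a a translation. *)
Definition motion := (pt * 'M[R]_3)%type.

Definition euclidean (m : motion) : Prop := m.2^T = - m.2.

Definition vel (m : motion) (x : pt) : pt := m.1 + x *m m.2.

Definition admissible (B : seq component) (M : nat -> motion) : Prop :=
  (forall i, (i < size B)%N -> euclidean (M i)) /\
  (forall i j x, (i < size B)%N -> (j < size B)%N ->
     in_comp (nth [::] B i) x -> in_comp (nth [::] B j) x ->
     vel (M i) x = vel (M j) x).

Definition rigid (B : seq component) : Prop :=
  forall M, admissible B M ->
    exists m : motion, euclidean m /\
      forall i x, (i < size B)%N -> in_comp (nth [::] B i) x ->
        vel (M i) x = vel m x.

Definition collinear (x y z : pt) : Prop :=
  (\rank (col_mx (y - x) (z - x)) <= 1)%N.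

Definition coplanar (x y z w : pt) : Prop :=
  (\rank (col_mx (y - x) (col_mx (z - x) (w - x))) <= 2)%N.

Definition common_rod (rods : seq rod) (qs : seq pt) : Prop :=
  exists r, r \in rods /\ forall q, q \in qs -> on_rod r q.

(* Generic position of the contact points ps (relative to the rods):
   they are pairwise distinct, three of them are collinear only if they lie
   on a common rod, and four of them are coplanar only if three of them lie
   on a common rod (i.e. only the coincidences forced by the incidences). *)
Definition generic_contacts (rods : seq rod) (ps : seq pt) : Prop :=
  [/\ uniq ps,
      (forall x y z, x \in ps -> y \in ps -> z \in ps ->
         uniq [:: x; y; z] -> collinear x y z -> common_rod rods [:: x; y; z])
    & (forall x y z w, x \in ps -> y \in ps -> z \in ps -> w \in ps ->
         uniq [:: x; y; z; w] -> coplanar x y z w ->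
         exists a b c, [/\ a \in [:: x; y; z; w], b \in [:: x; y; z; w],
                         c \in [:: x; y; z; w] & uniq [:: a; b; c]] /\
                       common_rod rods [:: a; b; c])].

End RodDefs.

(* Main.v *)
Require Import Defs.
From HB Require Import structures.
From mathcomp Require Import all_boot all_order all_algebra.
From mathcomp Require Import reals ring.
Import Order.TTheory GRing.Theory Num.Theory.
Local Open Scope ring_scope.
Set Implicit Arguments. Unset Strict Implicit.

Section S.
Variable R : realType.

Definition fD (m m0 : motion R) (x : pt R) : pt R := vel m x - vel m0 x.

Lemma fD_aff m m0 x : fD m m0 x = (m.1 - m0.1) + x *m (m.2 - m0.2).
Proof. by rewrite /fD /vel mulmxBr opprD addrACA. Qed.

Lemma fD_diff m m0 x y : fD m m0 x - fD m m0 y = (x - y) *m (m.2 - m0.2).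
Proof. by rewrite !fD_aff opprD addrACA subrr add0r mulmxBl. Qed.

Lemma skew_quad (W : 'M[R]_3) (v : pt R) : W^T = - W -> v *m W *m v^T = 0.
Proof.
move=> hW.
set k := v *m W *m v^T.
have hk : k^T = - k.
  by rewrite /k !trmx_mul trmxK hW mulNmx mulmxN mulmxA.
have : k^T = k by rewrite [k]mx11_scalar tr_scalar_mx.
rewrite hk => h.
have /eqP : k + k = 0 by rewrite -{1}h addNr.
by rewrite -mulr2n -scaler_nat scaler_eq0 pnatr_eq0 /= => /eqP.
Qed.
Lemma rod_diff (p q : pt R) (a b : R) :
  ((1 - a) *: p + a *: q) - ((1 - b) *: p + b *: q) = (a - b) *: (q - p).
Proof. apply/rowP=> i; rewrite !mxE; ring. Qed.

Lemma rod_line (r : rod R) x y z : on_rod r x -> on_rod r y -> on_rod r z -> y != z ->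
  exists mu : R, x - y = mu *: (z - y).
Proof.
move=> [tx [_ ->]] [ty [_ ->]] [tz [_ ->]] hyz.
have hne : tz - ty != 0.
  apply: contraNneq hyz => /eqP; rewrite subr_eq0 => /eqP ->. by [].
exists ((tx - ty) / (tz - ty)).
by rewrite !rod_diff scalerA divfK.
Qed.

Lemma zero_on_rod (f : pt R -> pt R) (W : 'M[R]_3) r x y z :
  (forall a b, f a - f b = (a - b) *m W) ->
  on_rod r x -> on_rod r y -> on_rod r z -> y != z -> f y = 0 -> f z = 0 -> f x = 0.
Proof.
move=> hf hx hy hz hyz fy fz.
have [mu hmu] := rod_line hx hy hz hyz.
have := hf x y; rewrite fy subr0 hmu -scalemxAl -hf fy fz subr0 scaler0 => ->.
by [].
Qed.

Lemma in_comp1 (r : rod R) x : in_comp [:: r] x <-> on_rod r x.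
Proof.
split; first by move=> [r' []]; rewrite inE => /eqP ->.
by move=> h; exists r; rewrite inE eqxx.
Qed.
End S.

Theorem mainTheorem3 (R : realType) (R1 : component R) (r2 r3 r4 : rod R)
    (p1 p2 p3 p4 p5 : pt R) :
  (* R1 is nonaxisymmetric: it contains more than one rod *)
  (1 < size R1)%N ->
  (* all rods are nondegenerate segments *)
  (forall r, r \in R1 -> nondeg_rod r) ->
  nondeg_rod r2 -> nondeg_rod r3 -> nondeg_rod r4 ->
  (* distinct components share no rod *)
  r2 \notin R1 -> r3 \notin R1 -> r4 \notin R1 ->
  r2 != r3 -> r2 != r4 -> r3 != r4 ->
  (* the contacts: each listed intersection is a single instance (a point) *)
  (forall x, in_comp R1 x /\ on_rod r2 x <-> x = p1) ->
  (forall x, in_comp R1 x /\ on_rod r3 x <-> x = p2) ->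
  (forall x, in_comp R1 x /\ on_rod r4 x <-> x = p3) ->
  (forall x, on_rod r2 x /\ on_rod r3 x <-> x = p4) ->
  (forall x, on_rod r3 x /\ on_rod r4 x <-> x = p5) ->
  (* generic position apart from the stated incidences *)
  generic_contacts (R1 ++ [:: r2; r3; r4]) [:: p1; p2; p3; p4; p5] ->
  (* p1, p2, p3 do not lie along one rod *)
  ~ (exists r, r \in R1 /\ on_rod r p1 /\ on_rod r p2 /\ on_rod r p3) ->
  rigid [:: R1; [:: r2]; [:: r3]; [:: r4]].
Proof.
move=> _ _ _ _ _ _ _ _ _ _ _ H12 H13 H14 H23 H34 [Hu _ Hcop] _.
move: (Hu) => /= /and5P [].
rewrite !inE !negb_or => /and4P [n12 n13 n14 n15] /and3P [n23 n24 n25] /andP [n34 n35] n45 _.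
have [c1 o12] := (H12 p1).2 erefl.
have [c2 o23] := (H13 p2).2 erefl.
have [c3 o34] := (H14 p3).2 erefl.
have [o42 o43] := (H23 p4).2 erefl.
have [o53 o54] := (H34 p5).2 erefl.
move=> M [Heu Hadm].
exists (M 0%N); split; first exact: Heu.
pose f i := fD (M i) (M 0%N).
pose W i := (M i).2 - (M 0%N).2.
have fW i a b : f i a - f i b = (a - b) *m W i by rewrite /f fD_diff.
have sk i : (i < 4)%N -> (W i)^T = - W i.
  by move=> hi; rewrite /W linearB /= !Heu // opprD opprK.
have fe i j x : (i < 4)%N -> (j < 4)%N ->
    in_comp (nth [::] [:: R1; [:: r2]; [:: r3]; [:: r4]] i) x ->
    in_comp (nth [::] [:: R1; [:: r2]; [:: r3]; [:: r4]] j) x -> f i x = f j x.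
  by move=> hi hj ci cj; rewrite /f /fD (Hadm i j x hi hj ci cj).
have f1a : f 1%N p1 = 0.
  by rewrite (fe 1%N 0%N p1) //= ?in_comp1 // /f /fD subrr.
have f2b : f 2%N p2 = 0.
  by rewrite (fe 2%N 0%N p2) //= ?in_comp1 // /f /fD subrr.
have f3c : f 3%N p3 = 0.
  by rewrite (fe 3%N 0%N p3) //= ?in_comp1 // /f /fD subrr.
have f12 : f 1%N p4 = f 2%N p4 by rewrite (fe 1%N 2%N p4) //= ?in_comp1.
have f23 : f 2%N p5 = f 3%N p5 by rewrite (fe 2%N 3%N p5) //= ?in_comp1.
set u := f 2%N p4.
have uA : u = (p4 - p1) *m W 1%N by rewrite /u -f12 -fW f1a subr0.
have uB : u = (p4 - p2) *m W 2%N by rewrite /u -fW f2b subr0.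
have d1 : u *m (p4 - p1)^T = 0 by rewrite uA skew_quad // sk.
have d2 : u *m (p4 - p2)^T = 0 by rewrite uB skew_quad // sk.
have [lam hlam] := rod_line o53 o23 o43 n24.
have f2s : f 2%N p5 = lam *: u.
  by rewrite -[f 2%N p5]subr0 -f2b fW hlam -scalemxAl -fW f2b subr0.
have d3' : f 3%N p5 *m (p5 - p3)^T = 0.
  by rewrite -[f 3%N p5]subr0 -f3c fW skew_quad // sk.
have lam0 : lam != 0.
  apply/eqP => l0; move: hlam; rewrite l0 scale0r => /eqP; rewrite subr_eq0.
  by rewrite eq_sym (negbTE n25).
have d3 : u *m (p5 - p3)^T = 0.
  move: d3'; rewrite -f23 f2s -scalemxAl => /eqP; rewrite scaler_eq0 (negbTE lam0) /=.
  by move/eqP.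
have e1 : u *m (p1 - p4)^T = 0 by rewrite -opprB linearN /= mulmxN d1 oppr0.
have hsq : p5 - p4 = lam *: (p4 - p2) - (p4 - p2).
  by rewrite -hlam; apply/rowP => k; rewrite !mxE; ring.
have e2 : u *m (p5 - p4)^T = 0.
  by rewrite hsq linearB linearZ /= mulmxBr -scalemxAr d2 scaler0 subr0.
have e3 : u *m (p3 - p4)^T = 0.
  have -> : p3 - p4 = (p5 - p4) - (p5 - p3) by apply/rowP => k; rewrite !mxE; ring.
  by rewrite linearB /= mulmxBr e2 d3 subr0.
set A := col_mx (p1 - p4) (col_mx (p5 - p4) (p3 - p4)).
have uA0 : u *m A^T = 0.
  by rewrite /A !tr_col_mx !mul_mx_row e1 e2 e3 !row_mx0.
have u0 : u = 0.
  case: (leqP (\rank A) 2) => hr.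
    exfalso.
    have [a' [b' [c' [[ha hb hc hu3] [r [hr0 hrq]]]]]] :
      exists a b c, [/\ a \in [:: p4; p1; p5; p3], b \in [:: p4; p1; p5; p3],
                         c \in [:: p4; p1; p5; p3] & uniq [:: a; b; c]] /\
                       common_rod (R1 ++ [:: r2; r3; r4]) [:: a; b; c].
      apply: Hcop => //; rewrite ?inE ?eqxx ?orbT //=.
      by rewrite !inE !negb_or !(eq_sym p4) !(eq_sym p5) n14 n45 n34 n15 n13 n35.
    have oa : on_rod r a' by apply: hrq; rewrite inE eqxx.
    have ob : on_rod r b' by apply: hrq; rewrite !inE eqxx orbT.
    have oc : on_rod r c' by apply: hrq; rewrite !inE eqxx !orbT.
    move: hr0; rewrite mem_cat !inE => /orP [hR1|/or3P [] /eqP er].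
    - have X1 : ~ on_rod r p4.
        move=> h; have := (H12 p4).1 (conj (ex_intro _ r (conj hR1 h)) o42).
        by move/eqP; rewrite eq_sym (negbTE n14).
      have X2 : ~ on_rod r p5.
        move=> h; have := (H13 p5).1 (conj (ex_intro _ r (conj hR1 h)) o53).
        by move/eqP; rewrite eq_sym (negbTE n25).
      move: ha hb hc oa ob oc hu3; rewrite !inE.
      by move=> /or4P [] /eqP -> /or4P [] /eqP -> /or4P [] /eqP -> oa ob oc hu3;
        first [ by move: hu3; rewrite /= !inE !eqxx ?orbT ?andbF
              | by apply: X1 | by apply: X2 ].
    - subst r.
      have X1 : ~ on_rod r2 p3.
        move=> h; have := (H12 p3).1 (conj c3 h).
        by move/eqP; rewrite eq_sym (negbTE n13).
      have X2 : ~ on_rod r2 p5.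
        move=> h; have := (H23 p5).1 (conj h o53).
        by move/eqP; rewrite eq_sym (negbTE n45).
      move: ha hb hc oa ob oc hu3; rewrite !inE.
      by move=> /or4P [] /eqP -> /or4P [] /eqP -> /or4P [] /eqP -> oa ob oc hu3;
        first [ by move: hu3; rewrite /= !inE !eqxx ?orbT ?andbF
              | by apply: X1 | by apply: X2 ].
    - subst r.
      have X1 : ~ on_rod r3 p1.
        move=> h; have := (H13 p1).1 (conj c1 h).
        by move/eqP; rewrite (negbTE n12).
      have X2 : ~ on_rod r3 p3.
        move=> h; have := (H13 p3).1 (conj c3 h).
        by move/eqP; rewrite eq_sym (negbTE n23).
      move: ha hb hc oa ob oc hu3; rewrite !inE.
      by move=> /or4P [] /eqP -> /or4P [] /eqP -> /or4P [] /eqP -> oa ob oc hu3;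
        first [ by move: hu3; rewrite /= !inE !eqxx ?orbT ?andbF
              | by apply: X1 | by apply: X2 ].
    - subst r.
      have X1 : ~ on_rod r4 p1.
        move=> h; have := (H14 p1).1 (conj c1 h).
        by move/eqP; rewrite (negbTE n13).
      have X2 : ~ on_rod r4 p4.
        move=> h; have := (H34 p4).1 (conj o43 h).
        by move/eqP; rewrite (negbTE n45).
      move: ha hb hc oa ob oc hu3; rewrite !inE.
      by move=> /or4P [] /eqP -> /or4P [] /eqP -> /or4P [] /eqP -> oa ob oc hu3;
        first [ by move: hu3; rewrite /= !inE !eqxx ?orbT ?andbF
              | by apply: X1 | by apply: X2 ].
  have rA : \rank A^T = 3%N.
    rewrite mxrank_tr; apply/eqP; rewrite eqn_leq hr andbT.
    exact: rank_leq_col.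
  have hk : kermx A^T = 0.
    by apply/eqP; rewrite -mxrank_eq0 mxrank_ker rA subnn.
  have : (u <= kermx A^T)%MS by apply/sub_kermxP.
  by rewrite hk submx0 => /eqP.
have fs0 : f 2%N p5 = 0 by rewrite f2s u0 scaler0.
move=> i x hi hx; apply/eqP; rewrite -subr_eq0; apply/eqP.
change (f i x = 0); move: hx.
case: i hi => [|[|[|[|i]]]] //= _.
- by rewrite /f /fD subrr.
- move/in_comp1 => hx.
  apply: (zero_on_rod (fW 1%N) hx o12 o42 n14 f1a); by rewrite f12.
- move/in_comp1 => hx.
  exact: (zero_on_rod (fW 2%N) hx o23 o43 n24 f2b).
- move/in_comp1 => hx.
  by apply: (zero_on_rod (fW 3%N) hx o34 o54 n35 f3c); rewrite -f23.
Qed.
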